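(* Fix an integer $k\geq1$ and $V=\{0,\ldots,k\}$. A Boolean function $\varphi$ on $V$ is fragmentable if and only if $\mathrm{eul}(\varphi)=0$.
   Context: A valuation is a subset $\nu\subseteq V$; $\nu^{(l)}$ is $\nu$ with membership of $l$ flipped. A Boolean function on $V$ is a map $\varphi:2^V\to\{\text{false},\text{true}\}$; $\mathrm{eul}(\varphi)=\sum_{\nu:\varphi(\nu)=\text{true}}(-1)^{|\nu|}$. $\varphi$ is degenerate if there is $l\in V$ with $\varphi(\nu)=\varphi(\nu^{(l)})$ for all $\nu$. Two functions are disjoint if no valuation satisfies both. A $\neg$-$\vee$-template is a Boolean circuit all of whose internal gates are $\neg$- or $\vee$-gates (a single leaf is allowed); its leaves $l_0,\ldots,l_n$ are holes. $T[\varphi_0,\ldots,\varphi_n]$ is the function obtained by substituting $\varphi_i$ for $l_i$; it is deterministic if, for every $\vee$-gate of the template, any two distinct inputs compute disjoint functions. $\varphi$ is fragmentable if there exist a $\neg$-$\vee$-template $T$ and degenerate functions $\varphi_0,\ldots,\varphi_n$ (one per hole) such that $T[\varphi_0,\ldots,\varphi_n]$ is deterministic and equivalent to $\varphi$. *)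

(* Defs.v *)
From mathcomp Require Import all_boot all_order all_algebra.
Set Implicit Arguments. Unset Strict Implicit. Unset Printing Implicit Defensive.
Import Order.TTheory GRing.Theory Num.Theory.

(* Variables V = {0,...,k} are the ordinals 'I_k.+1; a valuation is a subset of V. *)
Definition valuation (k : nat) := {set 'I_k.+1}.

Definition bfun (k : nat) := valuation k -> bool.

Definition flip k (nu : valuation k) (l : 'I_k.+1) : valuation k :=
  [set x | (x \in nu) != (x == l)].

Definition eul k (phi : bfun k) : int :=
  (\sum_(nu : {set 'I_k.+1} | phi nu) (-1) ^+ #|nu|)%R.

Definition degenerate k (phi : bfun k) : Prop :=
  exists l : 'I_k.+1, forall nu, phi nu = phi (flip nu l).

Definition disjoint_fun k (phi psi : bfun k) : Prop :=
  forall nu, ~~ (phi nu && psi nu).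

(* neg-or templates (formula form of circuits; holes are labelled by
   natural numbers, a hole label occurring several times models sharing
   of one hole leaf); Or-gates have arbitrary fan-in. *)
Inductive template : Type :=
| Hole of nat
| Neg of template
| Or of seq template.

Fixpoint tsubst k (sub : nat -> bfun k) (t : template) (nu : valuation k) : bool :=
  match t with
  | Hole i => sub i nu
  | Neg t' => ~~ tsubst sub t' nu
  | Or ts => (fix evs (ts : seq template) : bool :=
                match ts with
                | [::] => false
                | t' :: ts' => tsubst sub t' nu || evs ts'
                end) ts
  end.

Fixpoint holes (t : template) : seq nat :=
  match t with
  | Hole i => [:: i]
  | Neg t' => holes t'
  | Or ts => (fix hs (ts : seq template) : seq nat :=
                match ts with
                | [::] => [::]
                | t' :: ts' => holes t' ++ hs ts'
                end) ts
  end.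

Inductive deterministic k (sub : nat -> bfun k) : template -> Prop :=
| det_hole i : deterministic sub (Hole i)
| det_neg t : deterministic sub t -> deterministic sub (Neg t)
| det_or ts :
    (forall i, i < size ts -> deterministic sub (nth (Or [::]) ts i)) ->
    (forall i j, i < size ts -> j < size ts -> i != j ->
       disjoint_fun (tsubst sub (nth (Or [::]) ts i))
                    (tsubst sub (nth (Or [::]) ts j))) ->
    deterministic sub (Or ts).

Definition fragmentable k (phi : bfun k) : Prop :=
  exists (T : template) (sub : nat -> bfun k),
    (forall i, i \in holes T -> degenerate (sub i)) /\
    deterministic sub T /\
    (forall nu, tsubst sub T nu = phi nu).

(* Main.v *)
Require Import Defs.
From mathcomp Require Import all_boot all_order all_algebra zify.
From Stdlib Require Import FunctionalExtensionality.
Set Implicit Arguments. Unset Strict Implicit. Unset Printing Implicit Defensive.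
Import Order.TTheory GRing.Theory Num.Theory.

Fixpoint allT (P : template -> Prop) (ts : seq template) : Prop :=
  match ts with [::] => True | t :: ts => P t /\ allT P ts end.

Definition tmpl_ind (P : template -> Prop) (H1 : forall i, P (Hole i))
  (H2 : forall t, P t -> P (Neg t)) (H3 : forall ts, allT P ts -> P (Or ts)) :
  forall t, P t :=
  fix F t := match t return P t with
  | Hole i => H1 i
  | Neg t => H2 t (F t)
  | Or ts => H3 ts ((fix G ts : allT P ts := match ts return allT P ts with
                       | [::] => I | t :: ts => conj (F t) (G ts) end) ts)
  end.

Fixpoint relabel (r : nat -> nat) (t : template) : template :=
  match t with
  | Hole i => Hole (r i)
  | Neg t => Neg (relabel r t)
  | Or ts => Or (map (relabel r) ts)
  end.

Lemma tsubst_Or k (sub : nat -> bfun k) ts nu :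
  tsubst sub (Or ts) nu = has (fun t => tsubst sub t nu) ts.
Proof. by elim: ts => //= t ts ->. Qed.

Lemma holes_Or ts : holes (Or ts) = flatten (map holes ts).
Proof. by elim: ts => //= t ts ->. Qed.

Lemma tsubst_relabel k (sub : nat -> bfun k) r t nu :
  tsubst sub (relabel r t) nu = tsubst (fun i => sub (r i)) t nu.
Proof.
elim/tmpl_ind: t nu => [i|t IH|ts IH] nu //=; first by rewrite IH.
change (tsubst sub (Or (map (relabel r) ts)) nu = tsubst (fun i => sub (r i)) (Or ts) nu); rewrite !tsubst_Or.
elim: ts IH => //= t ts IHts [Ht Hts]. by rewrite Ht IHts.
Qed.

Lemma holes_relabel r t : holes (relabel r t) = map r (holes t).
Proof.
elim/tmpl_ind: t => [i|t IH|ts IH] //=.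
change (holes (Or (map (relabel r) ts)) = map r (holes (Or ts))); rewrite !holes_Or.
elim: ts IH => //= t ts IHts [Ht Hts]. by rewrite map_cat Ht IHts.
Qed.

Lemma det_relabel k (sub : nat -> bfun k) r t :
  deterministic (fun i => sub (r i)) t -> deterministic sub (relabel r t).
Proof.
elim => [i|t' _ IH|ts Hd IH Hdis] /=; try by constructor.
constructor; rewrite size_map => i.
  by move=> Hi; rewrite (nth_map (Or [::])) //; apply: IH.
move=> j Hi Hj Hij nu; rewrite !(nth_map (Or [::])) // !tsubst_relabel.
exact: Hdis.
Qed.
Inductive F k : bfun k -> Prop :=
| Fdeg f : degenerate f -> F f
| Fneg f : F f -> F (fun nu => ~~ f nu)
| For f g : F f -> F g -> disjoint_fun f g -> F (fun nu => f nu || g nu)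
| Fext f g : F f -> (forall nu, f nu = g nu) -> F g.

Lemma F_frag k (f : bfun k) : F f -> fragmentable f.
Proof.
elim => {f} [f Hd|f _ [T [sub [H1 [H2 H3]]]]|f g _ [T1 [s1 [H11 [H12 H13]]]] _ [T2 [s2 [H21 [H22 H23]]]] Hfg|f g _ [T [sub [H1 [H2 H3]]]] Hfg].
- exists (Hole 0), (fun _ => f); split; last by split => //; constructor.
  by move=> i _; exact: Hd.
- exists (Neg T), sub; split => //; split; first by constructor.
  by move=> nu /=; rewrite H3.
- pose sub := fun n => if odd n then s2 n./2 else s1 n./2.
  have E1 : (fun i => sub (i.*2)) = s1.
    by apply: functional_extensionality => i; rewrite /sub odd_double doubleK.
  have E2 : (fun i => sub (i.*2.+1)) = s2.
    apply: functional_extensionality => i.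
    by rewrite /sub /= odd_double /= uphalf_double.
  exists (Or [:: relabel double T1; relabel (fun i => i.*2.+1) T2]), sub.
  split; [|split].
  + move=> i; rewrite /= cats0 !holes_relabel mem_cat => /orP [] /mapP [j Hj ->].
      by rewrite -[sub _]/((fun i => sub i.*2) j) E1; apply: H11.
    by rewrite -[sub _]/((fun i => sub i.*2.+1) j) E2; apply: H21.
  + constructor.
      move=> [|[|i]] //= _; apply: det_relabel; [rewrite E1 | rewrite E2] => //.
    move=> [|[|i]] [|[|j]] //= _ _ _ nu; rewrite !tsubst_relabel ?E1 ?E2 ?H13 ?H23.
      exact: Hfg.
    by rewrite andbC; apply: Hfg.
  + by move=> nu /=; rewrite !tsubst_relabel E1 E2 H13 H23 orbF.
- exists T, sub; split => //; split => // nu; by rewrite H3.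
Qed.

Lemma flipK k (l : 'I_k.+1) : involutive (fun nu : valuation k => flip nu l).
Proof. by move=> nu; apply/setP => x; rewrite !inE; case: (x \in nu); case: (x == l). Qed.

Lemma flip_card k (nu : valuation k) l :
  ((-1) ^+ #|flip nu l| = - (-1) ^+ #|nu| :> int)%R.
Proof.
have [Hl|Hl] := boolP (l \in nu).
  have -> : flip nu l = nu :\ l.
    apply/setP => x; rewrite !inE; have [->|_] := eqVneq x l; first by rewrite Hl.
    by case: (x \in nu).
  by rewrite (cardsD1 l nu) Hl exprS mulN1r opprK.
have -> : flip nu l = l |: nu.
  apply/setP => x; rewrite !inE; have [->|_] := eqVneq x l; first by rewrite (negbTE Hl).
  by case: (x \in nu).
by rewrite cardsU1 Hl exprS mulN1r.
Qed.

Lemma eul_ext k (f g : bfun k) : (forall nu, f nu = g nu) -> eul f = eul g.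
Proof. by move=> H; apply: eq_bigl. Qed.

Lemma eul_deg k (f : bfun k) : degenerate f -> eul f = 0%R.
Proof.
move=> [l Hl].
have E : eul f = (- eul f)%R.
  rewrite {1}/eul (reindex_inj (can_inj (flipK l))) /= /eul -sumrN.
  by apply: eq_big => nu; rewrite -?Hl ?flip_card.
by move/eqP: E; rewrite -subr_eq0 opprK -mulr2n mulrn_eq0 /= => /eqP.
Qed.

Lemma eul_true k : eul (fun _ : valuation k => true) = 0%R.
Proof. by apply: eul_deg; exists ord0. Qed.

Lemma eul_neg k (f : bfun k) : eul (fun nu => ~~ f nu) = (- eul f)%R.
Proof.
have := eul_true k; rewrite /eul (bigID f) /= => /eqP.
by rewrite addr_eq0 => /eqP ->; rewrite opprK.
Qed.

Lemma eul_or k (f g : bfun k) : disjoint_fun f g ->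
  eul (fun nu => f nu || g nu) = (eul f + eul g)%R.
Proof.
move=> D; rewrite /eul (bigID f) /=; congr (_ + _)%R; apply: eq_bigl => nu.
  by move: (f nu) (g nu) => [] [].
by have := D nu; move: (f nu) (g nu) => [] [].
Qed.

Lemma eul_Or k (sub : nat -> bfun k) ts :
  (forall i, i < size ts -> eul (tsubst sub (nth (Or [::]) ts i)) = 0%R) ->
  (forall i j, i < size ts -> j < size ts -> i != j ->
       disjoint_fun (tsubst sub (nth (Or [::]) ts i))
                    (tsubst sub (nth (Or [::]) ts j))) ->
  eul (tsubst sub (Or ts)) = 0%R.
Proof.
elim: ts => [|t ts IH] H0 HD.
  by rewrite (eul_ext (g := fun _ => false)) // /eul big_pred0.
rewrite (eul_ext (g := fun nu => tsubst sub t nu || tsubst sub (Or ts) nu)); last first.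
  by move=> nu; rewrite !tsubst_Or.
rewrite eul_or.
  rewrite (H0 0) // IH ?addr0 //.
    by move=> i Hi; apply: (H0 i.+1).
  by move=> i j Hi Hj Hij; apply: (HD i.+1 j.+1).
move=> nu; rewrite tsubst_Or; apply/negP => /andP [H1 /(has_nthP (Or [::])) [j Hj H2]].
by have := HD 0 j.+1 erefl Hj erefl nu; rewrite /= H1 H2.
Qed.

Lemma frag_eul k (f : bfun k) : fragmentable f -> eul f = 0%R.
Proof.
move=> [T [sub [H1 [H2 H3]]]].
rewrite -(eul_ext H3); elim: H2 H1 => {T H3} [i|t _ IH|ts _ IH HD] Hh.
- by apply: eul_deg; apply: Hh; rewrite inE.
- by rewrite /= eul_neg IH ?oppr0.
- apply: eul_Or => // i Hi; apply: IH => // j Hj; apply: Hh.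
  rewrite holes_Or; apply/flattenP; exists (holes (nth (Or [::]) ts i)) => //.
  by rewrite -(nth_map (Or [::]) [::]) // mem_nth // size_map.
Qed.

Definition pairf k (a b : valuation k) : bfun k := fun x => (x == a) || (x == b).
Definition sd k (a b : valuation k) : valuation k := [set x | (x \in a) != (x \in b)].

Lemma pair_flip_deg k (a : valuation k) l : degenerate (pairf a (flip a l)).
Proof.
have E x y : (flip x l == y) = (x == flip y l).
  by apply/eqP/eqP => [<-|->]; rewrite flipK.
by exists l => nu; rewrite /pairf !E flipK orbC.
Qed.

Lemma F_diff k (f g : bfun k) : F f -> F g -> (forall nu, g nu -> f nu) ->
  F (fun nu => f nu && ~~ g nu).
Proof.
move=> Hf Hg Hgf; apply: (Fext (Fneg (For (Fneg Hf) Hg _))).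
  move=> nu; apply/negP => /andP [H1 H2]; by rewrite (Hgf _ H2) in H1.
by move=> nu /=; rewrite negb_or negbK.
Qed.

Lemma neq_at k (s t : valuation k) x : (x \in s) != (x \in t) -> (s == t) = false.
Proof. by move=> H; apply/eqP => E; rewrite E eqxx in H. Qed.

Lemma pair_F k d : forall (a b : valuation k), #|sd a b| = d -> odd d -> F (pairf a b).
Proof.
elim/ltn_ind: d => d IH a b Hd Hodd.
case: d IH Hd Hodd => [|[|m]] IH Hd Hodd //.
  have /cards1P [l Hl] : #|sd a b| == 1 by rewrite Hd.
  have -> : b = flip a l.
    apply/setP => x; move/setP/(_ x): Hl; rewrite /= !inE.
    by move: (x \in a) (x \in b) (x == l) => [] [] [].
  exact/Fdeg/pair_flip_deg.
have /card_gt1P [l [l' [Hl Hl' Hll]]] : 1 < #|sd a b| by rewrite Hd.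
set a1 := flip a l; set a2 := flip a1 l'.
have Hlb : (l \in b) = ~~ (l \in a).
  by move: Hl; rewrite inE; move: (l \in a) (l \in b) => [] [].
have Hlb' : (l' \in b) = ~~ (l' \in a).
  by move: Hl'; rewrite inE; move: (l' \in a) (l' \in b) => [] [].
have Hl'l : (l' == l) = false by rewrite eq_sym (negbTE Hll).
have Hsd : sd a2 b = sd a b :\ l :\ l'.
  apply/setP => x; rewrite !inE.
  have [->|nx'] := eqVneq x l'; first by rewrite Hlb' Hl'l; case: (l' \in a).
  have [->|nx] := eqVneq x l; first by rewrite Hlb; case: (l \in a).
  by case: (x \in a); case: (x \in b).
have Hcard : #|sd a2 b| = m.
  have := cardsD1 l (sd a b); have := cardsD1 l' (sd a b :\ l).
  by rewrite Hsd Hd Hl in_setD1 eq_sym Hll Hl' /=; lia.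
have Hm : odd m by move: Hodd => /=; rewrite negbK.
have F2 := IH m (ltnW (ltnSn _)) a2 b Hcard Hm.
have Ha_a1 : (a == a1) = false.
  by apply: (neq_at (x := l)); rewrite !inE eqxx; case: (l \in a).
have Ha_a2 : (a == a2) = false.
  by apply: (neq_at (x := l)); rewrite !inE eqxx (negbTE Hll); case: (l \in a).
have Ha_b : (a == b) = false.
  by apply: (neq_at (x := l)); rewrite Hlb; case: (l \in a).
have Ha1_a2 : (a1 == a2) = false.
  by apply: (neq_at (x := l')); rewrite !inE eqxx Hl'l; case: (l' \in a).
have Ha1_b : (a1 == b) = false.
  by apply: (neq_at (x := l')); rewrite !inE Hlb' Hl'l /=; case: (l' \in a).
have Ha2_b : (a2 == b) = false.
  apply/eqP => E; move: Hcard; rewrite E.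
  have -> : sd b b = set0 by apply/setP => x; rewrite !inE eqxx.
  by rewrite cards0 => Em; rewrite -Em in Hm.
have R := (Ha_a1, Ha_a2, Ha_b, Ha1_a2, Ha1_b, Ha2_b, eq_sym a1 a, eq_sym a2 a, eq_sym b a,
           eq_sym a2 a1, eq_sym b a1, eq_sym b a2).
have FA : F (fun nu => pairf a a1 nu || pairf a2 b nu).
  apply: For => //; first exact/Fdeg/pair_flip_deg.
  move=> nu; rewrite /pairf.
  have [->|n1] := eqVneq nu a; first by rewrite ?R ?eqxx.
  have [->|n2] := eqVneq nu a1; first by rewrite ?R ?eqxx.
  by rewrite ?(negbTE n1) ?(negbTE n2).
have FB : F (pairf a1 a2) by exact/Fdeg/pair_flip_deg.
apply: (Fext (F_diff FA FB _)) => nu; rewrite /pairf.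
  have [->|n1] := eqVneq nu a1; first by rewrite ?R ?eqxx.
  have [->|n2] := eqVneq nu a2; first by rewrite ?R ?eqxx ?orbT.
  by rewrite ?(negbTE n1) ?(negbTE n2).
have [->|n1] := eqVneq nu a; first by rewrite ?R ?eqxx.
have [->|n2] := eqVneq nu a1; first by rewrite ?R ?eqxx.
have [->|n3] := eqVneq nu a2; first by rewrite ?R ?eqxx.
by case: (nu == b).
Qed.

Lemma sd_odd k (a b : valuation k) : odd #|sd a b| = odd #|a| (+) odd #|b|.
Proof.
have E : sd a b = (a :\: b) :|: (b :\: a).
  by apply/setP => x; rewrite !inE; case: (x \in a); case: (x \in b).
have I : (a :\: b) :&: (b :\: a) = set0.
  by apply/setP => x; rewrite !inE; case: (x \in a); case: (x \in b).
have := cardsU (a :\: b) (b :\: a); rewrite I cards0 subn0 -E => ->.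
rewrite -(cardsID b a) -(cardsID a b) setIC !oddD.
by case: (odd #|b :&: a|); case: (odd #|a :\: b|); case: (odd #|b :\: a|).
Qed.

Lemma eul0_F k n : forall f : bfun k, #|[set nu | f nu]| = n -> eul f = 0%R -> F f.
Proof.
elim/ltn_ind: n => n IH f Hn He.
have [S0|[a Ha]] := set_0Vmem [set nu | f nu].
  apply: (@Fext _ (fun _ => false)).
    by apply: Fdeg; exists ord0.
  by move=> nu; apply/esym/negP => H; have := in_set0 nu; rewrite -S0 inE H.
rewrite inE in Ha.
have [b /andP [Hb Hab]|Hall] := pickP (fun b => f b && (odd #|b| != odd #|a|)); last first.
  exfalso; move: He; rewrite /eul.
  rewrite (eq_bigr (fun _ => (-1) ^+ odd #|a|)%R); last first.
    move=> nu Hnu; rewrite -signr_odd; have := Hall nu; rewrite Hnu /=.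
    by move/negbFE/eqP ->.
  rewrite (eq_bigl (fun nu => nu \in [set nu | f nu])); last by move=> nu; rewrite inE.
  rewrite sumr_const Hn => /eqP; rewrite mulrn_eq0 signr_eq0 orbF => /eqP n0.
  by move: Hn; rewrite n0 => /eqP; rewrite cards_eq0 => /eqP S0; have := in_set0 a; rewrite -S0 inE Ha.
have Hba : (b == a) = false by apply/eqP => E; rewrite E eqxx in Hab.
pose f' := fun x => f x && (x != a) && (x != b).
have Ff' : F f'.
  apply: (IH #|[set nu | f' nu]|).
  - rewrite -Hn [X in _ < X](cardsD1 a) inE Ha add1n ltnS; apply: subset_leq_card.
    by apply/subsetP => x; rewrite !inE /f' => /andP [/andP [-> ->] _].
  - by [].
  move: He; rewrite /eul (bigD1 a) //= (bigD1 b) /=; last by rewrite Hb Hba.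
  rewrite addrA -(signr_odd _ #|a|) -(signr_odd _ #|b|).
  move: Hab; case: (odd #|a|); case: (odd #|b|) => //= _;
  by rewrite ?expr0 ?expr1 ?subrr ?addNr ?add0r.
have Fp : F (pairf a b) by apply: (pair_F (erefl _)); rewrite sd_odd; move: Hab; case: (odd #|a|); case: (odd #|b|).
apply: (Fext (For Ff' Fp _)).
  move=> nu; rewrite /f' /pairf; apply/negP => /andP [/andP [/andP [_ H1] H2] /orP [] /eqP E].
    by rewrite E eqxx in H1.
  by rewrite E eqxx in H2.
move=> nu; rewrite /f' /pairf.
have [->|n1] := eqVneq nu a; first by rewrite Ha orbT.
have [->|n2] := eqVneq nu b; first by rewrite Hb orbT.
by rewrite /= andbT andbT orbF.
Qed.

Theorem corollary5p4 (k : nat) (hk : 1 <= k) (phi : bfun k) :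
  fragmentable phi <-> eul phi = 0%R.
Proof.
split; first exact: frag_eul.
by move=> H; apply: F_frag; apply: (eul0_F (erefl _) H).
Qed.
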